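(* Let $p$ be a prime. Let $G=P\times A$, where $P$ is a finite non-abelian $p$-group and $A$ is a non-trivial finite abelian group of order coprime to $p$. Let $H=P_1\times X$ be a finite nilpotent group, where $P_1$ is a non-abelian $p$-group and $X$ is a group with $\gcd(p,|X|)=1$. Suppose that $\Gamma_G$ and $\Gamma_H$ are irregular and $\Gamma_G\cong\Gamma_H$. Then $|G|=|H|$.
   Context: For a non-abelian group $G$ with center $Z(G)$, the non-commuting graph $\Gamma_G$ is the simple graph with vertex set $G\setminus Z(G)$ in which two distinct vertices $x,y$ are adjacent if and only if $xy\neq yx$. A graph is regular if all its vertices have the same degree, and irregular otherwise. *)

(* Defs.v *)
From mathcomp Require Import all_boot all_fingroup all_solvable.
Set Implicit Arguments. Unset Strict Implicit. Unset Printing Implicit Defensive.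
Local Open Scope group_scope.

Definition ncg_vert (gT : finGroupType) (G : {group gT}) : {set gT} :=
  G :\: 'Z(G).

(* Adjacency: distinct vertices x, y with xy <> yx (distinctness is
   automatic, since x commutes with itself). *)
Definition ncg_adj (gT : finGroupType) (G : {group gT}) (x y : gT) : bool :=
  [&& x \in ncg_vert G, y \in ncg_vert G, x != y & x * y != y * x].

Definition ncg_deg (gT : finGroupType) (G : {group gT}) (x : gT) : nat :=
  #|[set y in ncg_vert G | ncg_adj G x y]|.

Definition ncg_regular (gT : finGroupType) (G : {group gT}) : Prop :=
  {in ncg_vert G &, forall x y, ncg_deg G x = ncg_deg G y}.

Definition ncg_irregular (gT : finGroupType) (G : {group gT}) : Prop :=
  ~ ncg_regular G.

Definition ncg_iso (gT hT : finGroupType) (G : {group gT}) (H : {group hT})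
  : Prop :=
  exists f : gT -> hT,
    [/\ {in ncg_vert G &, injective f},
        f @: ncg_vert G = ncg_vert H &
        {in ncg_vert G &, forall x y, ncg_adj H (f x) (f y) = ncg_adj G x y}].

(* Main.v *)
Require Import Defs.
From mathcomp Require Import all_boot all_fingroup all_solvable.
From mathcomp Require Import zify.
Lemma logn_diff p c e1 e2 : prime p -> coprime c p -> 0 < c -> e1 < e2 ->
  logn p (c * p ^ e2 - c * p ^ e1) = e1.
Proof.
move=> pp cc c0 lt12.
have p0 : 0 < p by apply: prime_gt0.
have -> : c * p ^ e2 - c * p ^ e1 = (p ^ e1) * (c * (p ^ (e2 - e1) - 1)).
  rewrite -(subnKC (ltnW lt12)) expnD addKn.
  move: (p ^ e1) (p ^ (e2 - e1)) => q r; nia.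
have pd0 : 0 < p ^ (e2 - e1) - 1.
  by rewrite subn_gt0 -{1}(expn0 p) ltn_exp2l ?prime_gt1 // subn_gt0.
rewrite lognM ?expn_gt0 ?p0 ?muln_gt0 ?c0 ?pd0 // pfactorK //.
rewrite logn_Gauss; last by rewrite coprime_sym.
rewrite logn_coprime ?addn0 //.
rewrite prime_coprime //; apply/negP => dv.
have : p %| p ^ (e2 - e1) - (p ^ (e2 - e1) - 1).
  apply: dvdn_sub dv; apply: dvdn_exp => //; by rewrite subn_gt0.
rewrite subKn ?expn_gt0 ?p0 // dvdn1 => /eqP p1.
by move: (prime_gt1 pp); rewrite p1.
Qed.

Lemma diff3 (a1 a2 a3 b1 b2 b3 : nat) : a1 <= a2 -> a2 <= a3 -> b1 <= b2 -> b2 <= b3 ->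
  a2 - a1 = b2 - b1 -> a3 - a1 = b3 - b1 -> a3 - a2 = b3 - b2.
Proof. lia. Qed.

Lemma diff_eq (a1 a3 b1 b3 : nat) : a1 <= a3 -> b1 <= b3 -> a1 = b1 ->
  a3 - a1 = b3 - b1 -> a3 = b3.
Proof. lia. Qed.

Lemma cancel_diff (a u x y : nat) : y < x -> a * x - a * y = u * x - u * y -> a = u.
Proof.
move=> lt; rewrite -!mulnBr => /eqP; rewrite [a * _]mulnC [u * _]mulnC eqn_mul2l.
by rewrite subn_eq0 leqNgt lt /= => /eqP.
Qed.

Lemma diff2 (a1 a2 a3 b1 b2 b3 : nat) : a1 <= a2 -> a1 <= a3 -> b1 <= b2 -> b2 < b3 ->
  a2 - a1 = b2 - b1 -> a3 - a1 = b3 - b1 -> a2 < a3 /\ a3 - a2 = b3 - b2.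
Proof. lia. Qed.

Lemma diff_same (a1 a2 a3 b1 b2 b3 : nat) : a1 <= a2 -> a1 <= a3 -> b1 <= b2 -> b1 <= b3 ->
  a2 - a1 = b2 - b1 -> a3 - a1 = b3 - b1 -> a2 = a3 -> b2 = b3.
Proof. lia. Qed.

Lemma solve_alpha (q t u s al : nat) : 0 < q * u -> (q * t) * (u * s) = (q * u) * al -> al = t * s.
Proof.
move=> h e; apply/eqP; rewrite -(eqn_pmul2l h) -e; apply/eqP.
by rewrite mulnACA.
Qed.

Arguments logn_diff [p c e1 e2].
Arguments solve_alpha [q t u s al].
Arguments diff2 [a1 a2 a3 b1 b2 b3].
Arguments diff_same [a1 a2 a3 b1 b2 b3].
Arguments diff3 [a1 a2 a3 b1 b2 b3].
Arguments diff_eq [a1 a3 b1 b3].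
Arguments cancel_diff [a u x y].
Set Implicit Arguments. Unset Strict Implicit.
Local Open Scope group_scope.

Lemma sub_card (gT : finGroupType) (Q K H C : {group gT}) (p : nat) :
  p.-group Q -> Q \x K = H -> K \subset C -> C \subset H ->
  exists e, #|C| = (#|K| * p ^ e)%N.
Proof.
move=> pQ dQ sKC sCH.
have dK := cardSg sKC; have dH := cardSg sCH.
rewrite -(dprod_card dQ) in dH.
have K0 : (0 < #|K|)%N by apply: cardG_gt0.
have eC : #|C| = (#|C| %/ #|K| * #|K|)%N by rewrite divnK.
have dm : (#|C| %/ #|K|) %| #|Q|.
  by rewrite -(dvdn_pmul2r K0) -eC.
have /p_natP [k ek] := pnat_dvd dm pQ.
by exists k; rewrite mulnC -ek.
Qed.

Lemma sub_card2 (gT : finGroupType) (Q K H C : {group gT}) :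
  Q \x K = H -> Q \subset C -> C \subset H ->
  exists t, #|C| = (#|Q| * t)%N /\ t %| #|K|.
Proof.
move=> dQ sKC sCH.
have dK := cardSg sKC; have dH := cardSg sCH.
rewrite -(dprod_card dQ) in dH.
have K0 : (0 < #|Q|)%N by apply: cardG_gt0.
have eC : #|C| = (#|C| %/ #|Q| * #|Q|)%N by rewrite divnK.
exists (#|C| %/ #|Q|); split; first by rewrite mulnC -eC.
by rewrite -(dvdn_pmul2l K0) mulnC -eC.
Qed.

Lemma Zsub_C (gT : finGroupType) (G : {group gT}) x :
  x \in G -> 'Z(G) \subset 'C_G[x].
Proof.
move=> xG; apply/subsetP => z /centerP [zG cz].
by rewrite inE zG; apply/cent1P; apply: cz.
Qed.

Lemma vert_lt (gT : finGroupType) (G : {group gT}) x :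
  x \in ncg_vert G -> (#|'Z(G)| < #|'C_G[x]|)%N /\ (#|'C_G[x]| < #|G|)%N.
Proof.
rewrite /ncg_vert inE => /andP [xZ xG]; split; apply: proper_card.
  rewrite properE Zsub_C //=; apply/negP => /subsetP /(_ x).
  by rewrite inE xG cent1id (negbTE xZ) => /(_ isT).
rewrite properE subsetIl /=; apply/negP => sGC; move/negP: xZ; apply.
apply/centerP; split => // y yG.
have := subsetP sGC y yG; rewrite inE => /andP [_ /cent1P] c.
by [].
Qed.

Lemma nonadj_set (gT : finGroupType) (G : {group gT}) x :
  x \in ncg_vert G ->
  [set y in ncg_vert G | ~~ ncg_adj G x y] = 'C_G[x] :\: 'Z(G).
Proof.
move=> xV; apply/setP => y.
have e : (y \in 'C_G[x]) = (y \in G) && (x * y == y * x).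
  by rewrite in_setI cent1E eq_sym.
rewrite in_setD e in_set /ncg_adj xV /ncg_vert in_setD.
case: (y \in 'Z(G)) => //=; case: (y \in G) => //=.
rewrite negb_and !negbK.
case: eqP => [-> | _] //=; by rewrite ?eqxx.
Qed.

Lemma card_nonadj (gT : finGroupType) (G : {group gT}) x :
  x \in ncg_vert G ->
  #|[set y in ncg_vert G | ~~ ncg_adj G x y]| = (#|'C_G[x]| - #|'Z(G)|)%N.
Proof.
move=> xV; rewrite nonadj_set // cardsD; congr (_ - _)%N.
have xG : x \in G by move: xV; rewrite inE => /andP [].
by rewrite (setIidPr (Zsub_C xG)).
Qed.

Lemma card_vert (gT : finGroupType) (G : {group gT}) :
  #|ncg_vert G| = (#|G| - #|'Z(G)|)%N.
Proof. by rewrite /ncg_vert cardsD (setIidPr (center_sub G)). Qed.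


Lemma iso_rel (gT hT : finGroupType) (G : {group gT}) (H : {group hT}) f x :
  {in ncg_vert G &, injective f} -> f @: ncg_vert G = ncg_vert H ->
  {in ncg_vert G &, forall x y, ncg_adj H (f x) (f y) = ncg_adj G x y} ->
  x \in ncg_vert G ->
  (#|'C_G[x]| - #|'Z(G)| = #|'C_H[f x]| - #|'Z(H)|)%N.
Proof.
move=> finj fV fadj xV.
have fxV : f x \in ncg_vert H by rewrite -fV; apply: imset_f.
rewrite -card_nonadj // -card_nonadj //.
have -> : [set y in ncg_vert H | ~~ ncg_adj H (f x) y] =
          f @: [set y in ncg_vert G | ~~ ncg_adj G x y].
  apply/setP => z; apply/idP/imsetP.
    rewrite in_set => /andP []; rewrite -fV => /imsetP [y yV ->] na.
    by exists y => //; rewrite in_set yV /= -fadj.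
  move=> [y]; rewrite in_set => /andP [yV na] ->.
  by rewrite in_set fadj // na andbT -fV imset_f.
rewrite card_in_imset //; apply: sub_in2 finj => y; rewrite in_set => /andP []. by [].
Qed.

Lemma iso_card (gT hT : finGroupType) (G : {group gT}) (H : {group hT}) f :
  {in ncg_vert G &, injective f} -> f @: ncg_vert G = ncg_vert H ->
  (#|G| - #|'Z(G)| = #|H| - #|'Z(H)|)%N.
Proof. by move=> finj fV; rewrite -!card_vert -fV card_in_imset. Qed.

Lemma nonab_wit (gT : finGroupType) (G : {group gT}) :
  ~~ abelian G -> exists x y, [/\ x \in G, y \in G & x * y != y * x].
Proof.
case/subsetPn => x xG xC.
have : ~~ [forall y in G, x * y == y * x].
  apply: contra xC => /forall_inP h; apply/centP => y yG; apply/eqP; exact: h.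
by rewrite negb_forall_in => /exists_inP [y yG ne]; exists x, y.
Qed.

Lemma vertH (gT : finGroupType) (G : {group gT}) x y :
  x \in G -> y \in G -> x * y != y * x -> x \in ncg_vert G.
Proof.
move=> xG yG ne; rewrite /ncg_vert in_setD xG andbT; apply/negP.
by move/centerP => [_ c]; move/eqP: ne; apply; apply: c.
Qed.

Lemma sub_cent1 (gT : finGroupType) (K H L : {group gT}) x :
  K \subset H -> K \subset 'C(L) -> x \in L -> K \subset 'C_H[x].
Proof.
move=> KH KC xL; apply/subsetP => y yK; rewrite in_setI (subsetP KH) //= cent1E.
by apply/eqP; have /centP := subsetP KC y yK; apply.
Qed.

Lemma cent_prod (gT : finGroupType) (P1 X H : {group gT}) h1 h2 :
  P1 \x X = H -> h1 \in P1 -> h2 \in X ->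
  'C_H[h1 * h2] = 'C_H[h1] :&: 'C_H[h2].
Proof.
move=> dH h1P h2X; have [_ PX cXP tPX] := dprodP dH.
have cr : forall u v, u \in P1 -> v \in X -> commute u v.
  by move=> u v uP vX; have /centP := subsetP cXP v vX; move/(_ u uP).
have sP : P1 \subset H by rewrite -PX mulG_subl.
have sX : X \subset H by rewrite -PX mulG_subr.
apply/setP => y; rewrite !in_setI !cent1E; apply/idP/idP.
  case/andP => yH /eqP c.
  have [y1 [y2 [y1P y2X ey _]]] := mem_dprod dH yH.
  have e1 : y * (h1 * h2) = (y1 * h1) * (y2 * h2).
    by rewrite ey !mulgA -(mulgA y1 y2 h1) -(cr _ _ h1P y2X) !mulgA.
  have e2 : (h1 * h2) * y = (h1 * y1) * (h2 * y2).
    by rewrite ey !mulgA -(mulgA h1 h2 y1) -(cr _ _ y1P h2X) !mulgA.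
  have wH : y * (h1 * h2) \in H by apply: groupM yH (groupM (subsetP sP _ h1P) (subsetP sX _ h2X)).
  have [w1 [w2 [_ _ ew uq]]] := mem_dprod dH wH.
  have [a1 a2] := uq _ _ (groupM y1P h1P) (groupM y2X h2X) e1.
  rewrite c in ew uq.
  have [b1 b2] := uq _ _ (groupM h1P y1P) (groupM h2X y2X) e2.
  have c1 : commute y1 h1 by rewrite /commute a1 b1.
  have c2 : commute y2 h2 by rewrite /commute a2 b2.
  rewrite yH /= ey; apply/andP; split; apply/eqP.
    by apply/commute_sym; apply: commuteM; [exact: commute_sym | exact: cr].
  by apply/commute_sym; apply: commuteM; apply/commute_sym => //; exact: cr.
case/andP => /andP [yH /eqP c1] /andP [_ /eqP c2].
by rewrite yH /=; apply/eqP; apply: commuteM.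
Qed.

Unset Implicit Arguments.

Theorem mainTheorem6 (p : nat) (gT hT : finGroupType)
  (G P A : {group gT}) (H P1 X : {group hT}) :
  prime p ->
  P \x A = G -> p.-group P -> ~~ abelian P ->
  abelian A -> A :!=: 1 -> coprime #|A| p ->
  P1 \x X = H -> nilpotent H -> p.-group P1 -> ~~ abelian P1 ->
  coprime p #|X| ->
  ncg_irregular G -> ncg_irregular H -> ncg_iso G H ->
  #|G| = #|H|.
Proof.
move=> pp dG pP _ aA _ cAp dH _ pP1 nP1 cpX _ _ [f [finj fV fadj]].
have rel := iso_rel finj fV fadj.
have rc := iso_card finj fV.
have AZ : A \subset 'Z(G).
  have [_ <- _ _] := dprodP (center_dprod dG).
  by rewrite (center_idP aA) mulG_subr.
have sAG : A \subset G by apply: subset_trans AZ (center_sub G).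
have [k eZG] := sub_card pP dG AZ (center_sub G).
have [n eG] := sub_card pP dG sAG (subxx G).
have gC : forall x, x \in ncg_vert G -> exists e, #|'C_G[x]| = (#|A| * p ^ e)%N.
  move=> x xV; have xG : x \in G by move: xV; rewrite in_setD => /andP [].
  apply: (sub_card pP dG) (subsetIl _ _).
  exact: subset_trans AZ (Zsub_C xG).
have pre : forall h, h \in ncg_vert H -> exists2 x, x \in ncg_vert G & f x = h.
  by move=> h; rewrite -fV => /imsetP [x xV ->]; exists x.
have [_ PX cXP tPX] := dprodP dH.
have sP : P1 \subset H by rewrite -PX mulG_subl.
have sX : X \subset H by rewrite -PX mulG_subr.
have [h1 [y1 [h1P y1P ne1]]] := nonab_wit nP1.
have h1V : h1 \in ncg_vert H by apply: vertH (subsetP sP _ h1P) (subsetP sP _ y1P) ne1.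
have [xb xbV exb] := pre _ h1V.
have [u0 eb] := sub_card pP1 dH (sub_cent1 sX cXP h1P) (subsetIl _ _).
have [n' eH] := sub_card pP1 dH sX (subxx H).
have a0 : (0 < #|A|)%N by apply: cardG_gt0.
have u0p : (0 < #|X|)%N by apply: cardG_gt0.
have cXp : coprime #|X| p by rewrite coprime_sym.
have [zb bH] := vert_lt h1V.
have [zbG bGG] := vert_lt xbV.
have rb := rel _ xbV; rewrite exb in rb.
have [jb ecb] := gC _ xbV.
have p1 : (1 < p)%N by apply: prime_gt1.
case: (boolP (abelian X)) => aX.
  have XZ : X \subset 'Z(H).
    have [_ <- _ _] := dprodP (center_dprod dH).
    by rewrite (center_idP aX) mulG_subr.
  have [k' eZH] := sub_card pP1 dH XZ (center_sub H).
  rewrite eG eZG ecb in rc rb zbG bGG *.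
  rewrite eH eZH eb in rc rb zb bH *.
  move: zb bH zbG bGG; rewrite !ltn_pmul2l // !ltn_exp2l // => zb bH zbG bGG.
  have kk : k = k'.
    by rewrite -(logn_diff pp cAp a0 zbG) rb (logn_diff pp cXp u0p zb).
  have r3 : (#|A| * p ^ n - #|A| * p ^ jb = #|X| * p ^ n' - #|X| * p ^ u0)%N.
    have : (#|A| * p ^ k <= #|A| * p ^ jb)%N by rewrite leq_pmul2l // leq_exp2l // ltnW.
    have : (#|A| * p ^ jb <= #|A| * p ^ n)%N by rewrite leq_pmul2l // leq_exp2l // ltnW.
    have : (#|X| * p ^ k' <= #|X| * p ^ u0)%N by rewrite leq_pmul2l // leq_exp2l // ltnW.
    have : (#|X| * p ^ u0 <= #|X| * p ^ n')%N by rewrite leq_pmul2l // leq_exp2l // ltnW.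
    move=> i1 i2 i3 i4; exact: diff3 i4 i3 i2 i1 rb rc.
  have jj : jb = u0.
    by rewrite -(logn_diff pp cAp a0 bGG) r3 (logn_diff pp cXp u0p bH).
  subst k' u0.
  have aa : #|A| = #|X|.
    by apply: cancel_diff rb; rewrite ltn_exp2l.
  rewrite aa in rc *.
  have : (#|X| * p ^ k <= #|X| * p ^ n)%N by rewrite leq_pmul2l // leq_exp2l // ltnW // (ltn_trans zbG bGG).
  have : (#|X| * p ^ k <= #|X| * p ^ n')%N by rewrite leq_pmul2l // leq_exp2l // ltnW // (ltn_trans zb bH).
  by move=> i1 i2; apply: diff_eq i2 i1 erefl rc.
have [h2 [y2 [h2X y2X ne2]]] := nonab_wit aX.
have h2V : h2 \in ncg_vert H by apply: vertH (subsetP sX _ h2X) (subsetP sX _ y2X) ne2.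
have cr : forall u v, u \in P1 -> v \in X -> commute u v.
  by move=> u v uP vX; have /centP := subsetP cXP v vX; move/(_ u uP).
have hV : h1 * h2 \in ncg_vert H.
  apply: (vertH (groupM (subsetP sP _ h1P) (subsetP sX _ h2X)) (subsetP sP _ y1P)).
  apply: contra ne1 => /eqP e; apply/eqP; apply: (mulIg h2).
  by rewrite -mulgA (cr _ _ y1P h2X) mulgA e mulgA.
have [xa xaV exa] := pre _ hV.
have [xc xcV exc] := pre _ h2V.
have cPX : P1 \subset 'C(X) by rewrite centsC.
have [t [ec tdiv]] := sub_card2 dH (sub_cent1 sP cPX h2X) (subsetIl _ _).
have [q eP1] := p_natP pP1.
have prodC : ('C_H[h2] * 'C_H[h1])%g = H.
  apply/eqP; rewrite eqEsubset mul_subG ?subsetIl //=.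
  have := mulgSS (sub_cent1 sP cPX h2X) (sub_cent1 sX cXP h1P).
  by rewrite PX.
have mc := mul_cardG 'C_H[h2] 'C_H[h1].
rewrite prodC setIC -(cent_prod dH h1P h2X) in mc.
have eH2 : #|H| = (p ^ q * #|X|)%N by rewrite -eP1 (dprod_card dH).
have qn : q = n'.
  move: eH2; rewrite eH mulnC => /eqP; rewrite eqn_pmul2r // eqn_exp2l // => /eqP ->.
  by [].
subst q.
rewrite ec eb eH2 eP1 in mc.
have pq : (0 < p ^ n' * #|X|)%N by rewrite muln_gt0 expn_gt0 prime_gt0.
have ea' := solve_alpha pq mc.
have t0 : (0 < t)%N by apply: dvdn_gt0 tdiv.
have ctp : coprime t p by apply: coprime_dvdl tdiv cXp.
have ra := rel _ xaV; rewrite exa in ra.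
have rc' := rel _ xcV; rewrite exc in rc'.
have [za aH] := vert_lt hV.
have [zc cH] := vert_lt h2V.
have [zaG aGG] := vert_lt xaV.
have [zcG cGG] := vert_lt xcV.
have [ja eca] := gC _ xaV.
have [jc ecc] := gC _ xcV.
rewrite ecb eca ecc eG in rb ra rc' rc zbG bGG zaG aGG zcG cGG.
rewrite ea' eb ec eP1 eH in ra rb rc' rc za aH zc cH zb bH.
rewrite [(p ^ n' * t)%N]mulnC in rc' zc cH.
have sn : (u0 < n')%N by move: bH; rewrite ltn_pmul2l // ltn_exp2l.
have act : (t * p ^ u0 < t * p ^ n')%N by rewrite ltn_pmul2l // ltn_exp2l.
have [l1 d1] := diff2 (ltnW zaG) (ltnW zcG) (ltnW za) act ra rc'.
have [l2 d2] := diff2 (ltnW zbG) (ltnW (ltn_trans zbG bGG)) (ltnW zb) bH rb rc.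
have jaj : ja = u0.
  move: l1; rewrite ltn_pmul2l // ltn_exp2l // => l1.
  by rewrite -(logn_diff pp cAp a0 l1) d1 (logn_diff pp ctp t0 sn).
have jbj : jb = u0.
  move: l2; rewrite ltn_pmul2l // ltn_exp2l // => l2.
  by rewrite -(logn_diff pp cAp a0 l2) d2 (logn_diff pp cXp u0p sn).
have := diff_same (ltnW zaG) (ltnW zbG) (ltnW za) (ltnW zb) ra rb.
rewrite jaj jbj => /(_ erefl) /eqP; rewrite eqn_pmul2r ?expn_gt0 ?prime_gt0 // => /eqP tX.
by move: cH; rewrite tX mulnC ltnn.
Qed.
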